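(* Let $W_d$ be a subgroup of the Higman–Thompson group $V_d$ containing the commutator subgroup $[F_d,F_d]$. Then every non-trivial element of $W_d$ has infinitely many $[F_d,F_d]$-conjugates (so in particular $W_d$ is ICC); equivalently, the inclusion $L([F_d,F_d])\subseteq L(W_d)$ is irreducible. In particular, if $W_d$ contains $F_d$, then the inclusion $L(F_d)\subseteq L(W_d)$ is also irreducible.
   Context: Fix $d\ge 2$. A $d$-ary tree is a finite rooted tree in which each non-leaf vertex has exactly $d$ ordered children; leaves are numbered $1,\dots,n$ left to right; $T_k$ is $T$ with a $d$-ary caret attached to its $k$-th leaf. For $\sigma\in S_n$, $1\le k\le n$, partition $\{1,\dots,n+d-1\}$ into consecutive blocks $B^{(k)}_j=\{j\}$ ($j<k$), $B^{(k)}_k=\{k,\dots,k+d-1\}$, $B^{(k)}_j=\{j+d-1\}$ ($j>k$), and let $(\sigma)\varsigma_k^n\in S_{n+d-1}$ map $B^{(k)}_j$ onto $B^{(\sigma(k))}_{\sigma(j)}$ order-preservingly. The Higman–Thompson group $V_d$ is the group of classes $[T,\sigma,U]$ of triples with $T,U$ $d$-ary trees with $n$ leaves and $\sigma\in S_n$, under the equivalence generated by $(T,\sigma,U)\sim(T_{\sigma(k)},(\sigma)\varsigma_k^n,U_k)$, with product $[T,\sigma,U][U,\tau,W]=[T,\sigma\tau,W]$. $F_d$ is the subgroup of elements $[T,\mathrm{id},U]$, and $[F_d,F_d]$ its commutator subgroup. An inclusion of von Neumann algebras $N\subseteq M$ is irreducible if $N'\cap M\subseteq N$ (for a factor $N$: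 $N'\cap M=\mathbb{C}1$). $L(G)$ denotes the group von Neumann algebra. *)

(* Defs.v *)
From Stdlib Require Import Relations.
From mathcomp Require Import all_boot all_fingroup.
Set Implicit Arguments. Unset Strict Implicit. Unset Printing Implicit Defensive.

Inductive tree : Type := Leaf | Node of seq tree.

Fixpoint nleaves (t : tree) : nat :=
  match t with
  | Leaf => 1
  | Node l => (fix go (l : seq tree) : nat :=
                 match l with [::] => 0 | c :: r => nleaves c + go r end) l
  end.

Fixpoint wf (d : nat) (t : tree) : bool :=
  match t with
  | Leaf => true
  | Node l => (size l == d) &&
      (fix go (l : seq tree) : bool :=
         match l with [::] => true | c :: r => wf d c && go r end) l
  end.

(* [graft d t k] : attach a d-ary caret to the leaf of index k
   (leaves indexed 0,...,n-1 from left to right, i.e. leaf k+1 of the paper). *)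
Fixpoint graft (d : nat) (t : tree) (k : nat) : tree :=
  match t with
  | Leaf => if k == 0 then Node (nseq d Leaf) else Leaf
  | Node l => Node ((fix go (l : seq tree) (k : nat) : seq tree :=
        match l with
        | [::] => [::]
        | c :: r => if k < nleaves c then graft d c k :: r
                    else c :: go r (k - nleaves c)
        end) l k)
  end.

Record triple := Triple { tn : nat; tT : tree; tU : tree; tsig : 'S_tn }.

Definition valid (d : nat) (x : triple) : bool :=
  [&& wf d (tT x), wf d (tU x), nleaves (tT x) == tn x & nleaves (tU x) == tn x].

Definition pnat (n : nat) (s : 'S_n) (j : nat) : nat :=
  match @insub nat (fun i => i < n) _ j with
  | Some o => val (s o) | None => j end.

(* the permutation (sigma) varsigma_k^n, 0-indexed, as a function on nat *)
Definition blk (d k i : nat) : nat :=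
  if i < k then i else if i < k + d then k else i - (d - 1).
Definition offs (d k i : nat) : nat :=
  if (k <= i) && (i < k + d) then i - k else 0.
Definition bstart (d m l : nat) : nat :=
  if l < m then l else if l == m then m else l + (d - 1).
Definition varsigma (d n : nat) (s : 'S_n) (k i : nat) : nat :=
  bstart d (pnat s k) (pnat s (blk d k i)) + offs d k i.

(* elementary expansion (T,s,U) -> (T_{s(k)}, (s)varsigma_k, U_k) *)
Definition expand (d : nat) (x y : triple) : Prop :=
  valid d x /\
  exists k : 'I_(tn x),
    [/\ tn y = tn x + (d - 1),
        tT y = graft d (tT x) (val (tsig x k)),
        tU y = graft d (tU x) k
      & forall i : 'I_(tn y), val (tsig y i) = varsigma d (tsig x) k i].

Definition tequiv (d : nat) : relation triple := clos_refl_sym_trans _ (expand d).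

Definition tid : triple := @Triple 1 Leaf Leaf 1%g.

Definition tinv (x : triple) : triple := @Triple (tn x) (tU x) (tT x) (tsig x)^-1%g.

(* product relation: [T,s,U][U,t,W] = [T, s o t, W] (the product permutation
   sends k to s(t(k))) *)
Definition tmul (d : nat) (x y z : triple) : Prop :=
  exists a b c : triple,
    (valid d a /\ valid d b /\ valid d c) /\
    (tequiv d x a /\ tequiv d y b /\ tequiv d z c) /\
    (tn a = tn c /\ tn b = tn c) /\
    (tT c = tT a /\ tU a = tT b /\ tU c = tU b) /\
    (forall i, i < tn c -> pnat (tsig c) i = pnat (tsig a) (pnat (tsig b) i)).

Definition inF (d : nat) (x : triple) : Prop :=
  exists y, [/\ valid d y, tequiv d x y & tsig y = 1%g].

Definition tcomm (d : nat) (a b c : triple) : Prop :=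
  exists p q, [/\ tmul d a b p, tmul d (tinv a) (tinv b) q & tmul d p q c].

Inductive inFF (d : nat) : triple -> Prop :=
| FF_comm a b c : inF d a -> inF d b -> valid d a -> valid d b -> valid d c ->
                  tcomm d a b c -> inFF d c
| FF_id : inFF d tid
| FF_inv x : inFF d x -> inFF d (tinv x)
| FF_mul x y z : inFF d x -> inFF d y -> valid d z -> tmul d x y z -> inFF d z
| FF_eq x y : inFF d x -> valid d y -> tequiv d x y -> inFF d y.

Definition is_subgroupV (d : nat) (W : triple -> Prop) : Prop :=
  [/\ (forall x, W x -> valid d x),
      (forall x y, W x -> valid d y -> tequiv d x y -> W y),
      W tid,
      (forall x, W x -> W (tinv x))
    & (forall x y z, W x -> W y -> valid d z -> tmul d x y z -> W z)].

Definition tconj (d : nat) (h g c : triple) : Prop :=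
  exists p, tmul d h g p /\ tmul d p (tinv h) c.

(* g has infinitely many H-conjugates (as elements of V_d, i.e. up to tequiv):
   no finite list of triples covers all of them *)
Definition inf_conj (d : nat) (H : triple -> Prop) (g : triple) : Prop :=
  forall s : seq triple, exists h c,
    [/\ H h, valid d h, valid d c, tconj d h g c
      & forall i, i < size s -> ~ tequiv d c (nth tid s i)].

(* Main.v *)
From Pilot Require Import Defs.
From Stdlib Require Import Relations FunctionalExtensionality Classical.
From mathcomp Require Import all_boot all_fingroup.
From mathcomp Require Import zify.

Module Aux.
Set Implicit Arguments. Unset Strict Implicit. Unset Printing Implicit Defensive.
Notation pnat := Pilot.Defs.pnat.

Fixpoint tree_ind' (P : tree -> Prop) (HL : P Leaf)
  (HN : forall l, foldr (fun c acc => P c /\ acc) True l -> P (Node l)) (t : tree) : P t :=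
  match t with
  | Leaf => HL
  | Node l => HN l ((fix go (l : seq tree) : foldr (fun c acc => P c /\ acc) True l :=
       match l with [::] => I | c :: r => conj (tree_ind' HL HN c) (go r) end) l)
  end.

Lemma foldr_nth (P : tree -> Prop) l : foldr (fun c acc => P c /\ acc) True l ->
  forall i, i < size l -> P (nth Leaf l i).
Proof. elim: l => [|c r IH] //= [Hc Hr] [|i] //= Hi. by apply: IH. Qed.

Fixpoint leaves (t : tree) : seq (seq nat) :=
  match t with
  | Leaf => [:: [::]]
  | Node l => (fix go (l : seq tree) (j : nat) := match l with [::] => [::]
       | c :: r => map (cons j) (leaves c) ++ go r j.+1 end) l 0
  end.

Fixpoint lgo (l : seq tree) (j : nat) := match l with [::] => [::]
  | c :: r => map (cons j) (leaves c) ++ lgo r j.+1 end.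

Lemma leavesN l : leaves (Node l) = lgo l 0.
Proof. by []. Qed.

Lemma nleavesN l : nleaves (Node l) = sumn (map nleaves l).
Proof. by elim: l => //= c r; rewrite /= => <-. Qed.

Lemma wfN d l : wf d (Node l) = (size l == d) && all (wf d) l.
Proof. rewrite /=; congr andb; by elim: l => //= c r ->. Qed.

Lemma size_lgo l j : size (lgo l j) = sumn (map (fun c => size (leaves c)) l).
Proof. elim: l j => //= c r IH j. by rewrite size_cat size_map IH. Qed.

Lemma size_leaves t : size (leaves t) = nleaves t.
Proof.
elim/tree_ind': t => // l IH. rewrite leavesN nleavesN size_lgo.
elim: l IH => //= c r IH [-> H]. by rewrite IH.
Qed.

Lemma mem_lgo l j x : x \in lgo l j <->
  exists i y, [/\ i < size l, y \in leaves (nth Leaf l i) & x = (j + i) :: y].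
Proof.
elim: l j x => [|c r IH] j x /=.
  by split => // -[i [y []]].
rewrite mem_cat. split.
- case/orP => [/mapP [y Hy ->]|/IH [i [y [Hi Hy ->]]]].
  + by exists 0, y; rewrite addn0.
  + by exists i.+1, y; rewrite addSnnS.
- case=> [[|i] [y [Hi Hy ->]]].
  + by apply/orP; left; apply/mapP; exists y; rewrite ?addn0.
  + by apply/orP; right; apply (IH j.+1); exists i, y; by rewrite addSnnS.
Qed.

Lemma memN l x : x \in leaves (Node l) <->
  exists i y, [/\ i < size l, y \in leaves (nth Leaf l i) & x = i :: y].
Proof. by rewrite leavesN mem_lgo. Qed.

Definition good (d : nat) (s : nat -> nat) := forall n, s n < d.
Definition prefb (a : seq nat) (s : nat -> nat) := mkseq s (size a) == a.
Definition sapp (a : seq nat) (r : nat -> nat) : nat -> nat :=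
  fun n => if n < size a then nth 0 a n else r (n - size a).
Definition sdrop (k : nat) (s : nat -> nat) : nat -> nat := fun n => s (k + n).

Lemma prefbP a s : reflect (forall j, j < size a -> nth 0 a j = s j) (prefb a s).
Proof.
apply: (iffP eqP) => [E j Hj|H]; first by rewrite -E nth_mkseq.
apply: (@eq_from_nth _ 0); rewrite size_mkseq // => j Hj. by rewrite nth_mkseq // H.
Qed.

Lemma leaves_complete d t s : wf d t -> good d s -> has (prefb^~ s) (leaves t).
Proof.
elim/tree_ind': t s => [|l IH] s; first by rewrite /= /prefb.
rewrite wfN => /andP [/eqP Hl Hw0] Hs; have Hw := all_nthP Leaf Hw0.
have H0 : s 0 < size l by rewrite Hl.
have [y Hy Hp] : exists2 y, y \in leaves (nth Leaf l (s 0)) & prefb y (sdrop 1 s).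
  have /hasP := foldr_nth IH H0 (sdrop 1 s) (Hw _ H0) (fun n => Hs _).
  by move=> [y Hy Hp]; exists y.
apply/hasP; exists (s 0 :: y); first by apply/memN; exists (s 0), y.
apply/prefbP => -[|j] //= Hj. by move/prefbP: Hp => ->.
Qed.

Lemma leaves_pfree t a b : a \in leaves t -> b \in leaves t ->
  a = take (size a) b -> a = b.
Proof.
elim/tree_ind': t a b => [|l IH] a b; first by rewrite !inE => /eqP -> /eqP ->.
move=> /memN [i [a' [Hi Ha ->]]] /memN [i' [b' [Hi' Hb ->]]] /= [Eii E].
subst i'. by rewrite (foldr_nth IH Hi a' b' Ha Hb E).
Qed.

Lemma lgo_head l j x : x \in lgo l j -> exists k y, j <= k /\ x = k :: y.
Proof. by move/mem_lgo => [i [y [_ _ ->]]]; exists (j + i), y; rewrite leq_addr. Qed.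

Lemma leaves_uniq t : uniq (leaves t).
Proof.
elim/tree_ind': t => // l IH. rewrite leavesN.
elim: l 0 IH => //= c r IHr j [Hc Hr].
rewrite cat_uniq map_inj_uniq ?Hc ?IHr //=; last by move=> ? ? [].
rewrite andbT; apply/hasPn => x /lgo_head [k [y [Hk ->]]]; apply/mapP => -[z _ [E _]].
by move: Hk; rewrite E ltnn.
Qed.

Lemma leaves_digits d t a : wf d t -> a \in leaves t -> all (fun x => x < d) a.
Proof.
elim/tree_ind': t a => [|l IH] a; first by rewrite inE => _ /eqP ->.
rewrite wfN => /andP [/eqP Hl Hw0] /memN [i [y [Hi Hy ->]]] /=; have Hw := all_nthP Leaf Hw0.
rewrite -Hl Hi /= Hl. exact: (foldr_nth IH Hi y (Hw _ Hi) Hy).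
Qed.

Lemma leavesN_ne l a : a \in leaves (Node l) -> a <> [::].
Proof. by move/memN => [i [y [_ _ ->]]]. Qed.

Fixpoint subst (t : tree) (k : nat) (S : tree) : tree :=
  match t with
  | Leaf => if k == 0 then S else Leaf
  | Node l => Node ((fix go (l : seq tree) (k : nat) : seq tree :=
        match l with [::] => [::]
        | c :: r => if k < nleaves c then subst c k S :: r else c :: go r (k - nleaves c) end) l k)
  end.

Fixpoint sgo (l : seq tree) (k : nat) (S : tree) : seq tree :=
  match l with [::] => [::]
  | c :: r => if k < nleaves c then subst c k S :: r else c :: sgo r (k - nleaves c) S end.

Lemma substN l k S : subst (Node l) k S = Node (sgo l k S).
Proof. rewrite /=; congr Node; elim: l k => //= c r IH k; by rewrite IH. Qed.

Definition caret d := Node (nseq d Leaf).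

Lemma graft_subst d t k : graft d t k = subst t k (caret d).
Proof.
elim/tree_ind': t k => // l IH k /=. congr Node.
elim: l k IH => //= c r IHr k [Hc Hr]. case: ifP => _; first by rewrite Hc.
by rewrite IHr.
Qed.

Lemma nth_splice (T : Type) (x0 : T) (L M : seq T) i j : i < size L ->
  nth x0 (take i L ++ M ++ drop i.+1 L) j =
  if j < i then nth x0 L j else if j < i + size M then nth x0 M (j - i)
  else nth x0 L (j.+1 - size M).
Proof.
move=> Hi. rewrite nth_cat size_take Hi.
case: ltnP => Hj; first by rewrite nth_take.
rewrite nth_cat. case: ltnP => Hj2.
  by rewrite ifT //; lia.
rewrite ifF; last by lia.
rewrite nth_drop. congr nth. lia.
Qed.

Lemma drop_cat_le (T : Type) n (A B : seq T) : n <= size A -> drop n (A ++ B) = drop n A ++ B.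
Proof. elim: A n => [|a A IH] [|n] //=; first by case: B. by move=> H; rewrite IH. Qed.

Lemma leaves_subst t k S : k < nleaves t ->
  leaves (subst t k S) = take k (leaves t) ++
     map (cat (nth [::] (leaves t) k)) (leaves S) ++ drop k.+1 (leaves t).
Proof.
elim/tree_ind': t k => [|l IH] k.
  case: k => // _ /=; rewrite cats0; by elim: (leaves S) => //= a s {1}->.
rewrite nleavesN substN !leavesN.
elim: l k 0 IH => //= c r IHr k j [Hc Hr].
have Hsz := size_leaves c.
case: ifP => Hk Hk2 /=.
  rewrite Hc // !map_cat -!catA. rewrite take_cat size_map Hsz Hk map_take.
  rewrite nth_cat size_map Hsz Hk drop_cat_le ?size_map ?Hsz //.
  rewrite (nth_map [::]) ?Hsz // map_drop -map_comp. by [].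
rewrite IHr //; last by lia.
rewrite take_cat size_map Hsz ltnNge leqNgt Hk /= nth_cat size_map Hsz ltnNge leqNgt Hk /=.
rewrite drop_cat size_map Hsz.
have -> : (k.+1 < nleaves c) = false by lia.
rewrite -!catA. congr cat. congr cat. congr cat. congr drop. lia.
Qed.

Lemma size_sgo l k S : size (sgo l k S) = size l.
Proof. elim: l k => //= c r IH k; case: ifP => //= _; by rewrite IH. Qed.

Lemma wf_subst d t k S : wf d t -> wf d S -> wf d (subst t k S).
Proof.
move=> + HS; elim/tree_ind': t k => [|l IH] k; first by case: k.
rewrite substN !wfN size_sgo => /andP [-> /=].
elim: l k IH => //= c r IHr k [Hc Hr] /andP [Hwc Hwr].
case: ifP => _ /=; first by rewrite Hc.
by rewrite Hwc IHr.
Qed.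

Lemma nleaves_subst t k S : k < nleaves t ->
  nleaves (subst t k S) = nleaves t - 1 + nleaves S.
Proof.
move=> Hk. rewrite -!size_leaves leaves_subst // !size_cat size_map size_take size_drop.
rewrite size_leaves Hk. lia.
Qed.

Lemma lgo_nseq m j : lgo (nseq m Leaf) j = [seq [:: i] | i <- iota j m].
Proof. by elim: m j => //= m IH j; rewrite IH. Qed.

Lemma leaves_caret d : leaves (caret d) = [seq [:: i] | i <- iota 0 d].
Proof. by rewrite /caret leavesN lgo_nseq. Qed.

Lemma wf_caret d : wf d (caret d).
Proof. by rewrite /caret wfN size_nseq eqxx all_nseq orbT. Qed.

Lemma nleaves_caret d : nleaves (caret d) = d.
Proof. by rewrite -size_leaves leaves_caret size_map size_iota. Qed.

Definition lgraft d (L : seq (seq nat)) k :=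
  take k L ++ [seq rcons (nth [::] L k) o | o <- iota 0 d] ++ drop k.+1 L.

Lemma leaves_graft d t k : k < nleaves t -> leaves (graft d t k) = lgraft d (leaves t) k.
Proof.
move=> Hk. rewrite graft_subst leaves_subst // leaves_caret /lgraft -map_comp.
congr (_ ++ _ ++ _). apply: eq_map => o /=. by rewrite cats1.
Qed.

Lemma wf_graft d t k : wf d t -> wf d (graft d t k).
Proof. move=> H; rewrite graft_subst; apply: wf_subst => //; exact: wf_caret. Qed.

Lemma nleaves_graft d t k : 0 < d -> k < nleaves t -> nleaves (graft d t k) = nleaves t + (d - 1).
Proof. move=> Hd Hk; rewrite graft_subst nleaves_subst // nleaves_caret. lia. Qed.

Lemma pnatE n (s : 'S_n) j (H : j < n) : pnat s j = val (s (Ordinal H)).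
Proof. rewrite /pnat insubT /=. congr (val (s _)); exact: val_inj. Qed.

Lemma pnat_out n (s : 'S_n) j : n <= j -> pnat s j = j.
Proof. move=> H; rewrite /pnat insubF //; lia. Qed.

Lemma pnat_lt n (s : 'S_n) j : j < n -> pnat s j < n.
Proof. move=> H; rewrite (pnatE s H); exact: ltn_ord. Qed.

Lemma pnat_inj n (s : 'S_n) i j : i < n -> j < n -> pnat s i = pnat s j -> i = j.
Proof.
move=> Hi Hj; rewrite (pnatE s Hi) (pnatE s Hj) => /val_inj /perm_inj.
by move/(congr1 val).
Qed.

Lemma pnat1 n j : pnat (1 : 'S_n)%g j = j.
Proof.
case: (ltnP j n) => H; last by rewrite pnat_out.
by rewrite (pnatE _ H) perm1.
Qed.

Lemma pnatM n (s t : 'S_n) j : pnat (s * t)%g j = pnat t (pnat s j).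
Proof.
case: (ltnP j n) => H; last by rewrite !pnat_out.
rewrite (pnatE _ H) permM (pnatE _ (pnat_lt s H)). congr (val (t _)).
apply: val_inj => /=. by rewrite (pnatE s H).
Qed.

Lemma pnatV n (s : 'S_n) j : pnat (s^-1)%g (pnat s j) = j.
Proof. by rewrite -pnatM mulgV pnat1. Qed.

Lemma pnatK n (s : 'S_n) j : pnat s (pnat (s^-1)%g j) = j.
Proof. by rewrite -pnatM mulVg pnat1. Qed.

Lemma perm_eq_pnat n (s t : 'S_n) : (forall j, j < n -> pnat s j = pnat t j) -> s = t.
Proof.
move=> H; apply/permP => i; apply: val_inj.
have := H i (ltn_ord i); rewrite !(pnatE _ (ltn_ord i)).
by have -> : Ordinal (ltn_ord i) = i by apply: val_inj.
Qed.

Lemma sapp_pref a s : prefb a s -> sapp a (sdrop (size a) s) = s.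
Proof.
move/prefbP => H; apply: functional_extensionality => n; rewrite /sapp /sdrop.
case: ltnP => Hn; first exact: H. congr s; lia.
Qed.

Lemma pref_sapp a r : prefb a (sapp a r).
Proof. by apply/prefbP => j Hj; rewrite /sapp Hj. Qed.

Lemma sdrop_sapp a r : sdrop (size a) (sapp a r) = r.
Proof.
apply: functional_extensionality => n; rewrite /sapp /sdrop.
case: ifP => H; [lia| congr r; lia].
Qed.

Lemma sapp_cat a b r : sapp (a ++ b) r = sapp a (sapp b r).
Proof.
apply: functional_extensionality => n; rewrite /sapp size_cat nth_cat.
case: (ltnP n (size a)) => H1.
  by have -> : n < size a + size b by lia.
have -> : (n - size a < size b) = (n < size a + size b) by lia.
case: ltnP => // H2. congr r; lia.
Qed.

Lemma good_sapp d a r : all (fun x => x < d) a -> good d r -> good d (sapp a r).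
Proof.
move=> /(all_nthP 0) Ha Hr n; rewrite /sapp; case: (ltnP n (size a)) => H //. exact: Ha.
Qed.

Lemma good_sdrop d k s : good d s -> good d (sdrop k s).
Proof. by move=> H n; apply: H. Qed.

Lemma prefb_cat a b s : prefb (a ++ b) s = prefb a s && prefb b (sdrop (size a) s).
Proof.
apply/prefbP/andP => [H|[/prefbP H1 /prefbP H2] j].
  split; apply/prefbP => j Hj.
  - by rewrite -H ?nth_cat ?Hj // size_cat; lia.
  - have := H (size a + j); rewrite /sdrop nth_cat size_cat.
    have -> : (size a + j < size a) = false by lia.
    rewrite addKn => -> //; lia.
rewrite size_cat nth_cat; case: (ltnP j (size a)) => Hj1 Hj2; first exact: H1.
rewrite H2 /sdrop; [congr s; lia| lia].
Qed.

Lemma prefb_rcons a o s : prefb (rcons a o) s = prefb a s && (s (size a) == o).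
Proof.
rewrite -cats1 prefb_cat; congr andb.
apply/prefbP/eqP => [H|<- [|j] //]; first by have := H 0 isT; rewrite /sdrop addn0.
by rewrite /sdrop addn0.
Qed.

Lemma sapp_rcons a o e s : s e = o ->
  sapp (rcons a o) (sdrop e.+1 s) = sapp a (sdrop e s).
Proof.
move=> Ho; apply: functional_extensionality => n; rewrite /sapp /sdrop size_rcons nth_rcons.
case: (ltnP n (size a)) => H1.
  by have -> : n < (size a).+1 by lia.
case: (ltnP n (size a).+1) => H2.
  have -> : n = size a by lia.
  by rewrite eqxx subnn addn0.
congr s; lia.
Qed.

Lemma sapp_inj a b : (forall r : nat -> nat, sapp a r = sapp b r) -> a = b.
Proof.
move=> H.
have Hn r n : sapp a r n = sapp b r n by rewrite H.
have Hs : size a = size b.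
  apply/eqP; rewrite eqn_leq; apply/andP; split; rewrite leqNgt; apply/negP => Hlt.
  - have := Hn (fun _ => 0) (size b); have := Hn (fun _ => 1) (size b).
    by rewrite /sapp Hlt ltnn ?subnn => ->.
  - have := Hn (fun _ => 0) (size a); have := Hn (fun _ => 1) (size a).
    by rewrite /sapp Hlt ltnn ?subnn => <-.
apply: (@eq_from_nth _ 0 _ _ Hs) => j Hj.
by have := Hn (fun _ => 0) j; rewrite /sapp Hj -Hs Hj.
Qed.

Lemma pref_comparable a b s : prefb a s -> prefb b s -> size a <= size b ->
  a = take (size a) b.
Proof.
move=> /prefbP Ha /prefbP Hb Hs.
apply: (@eq_from_nth _ 0); first by rewrite size_take; case: ltnP => //; lia.
move=> j Hj. rewrite nth_take // Ha // Hb //; lia.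
Qed.

Lemma find_leaves t s j : j < nleaves t -> prefb (nth [::] (leaves t) j) s ->
  find (prefb^~ s) (leaves t) = j.
Proof.
rewrite -size_leaves => Hj Hp.
have Hh : has (prefb^~ s) (leaves t) by apply/hasP; exists (nth [::] (leaves t) j); rewrite ?mem_nth.
have Hi : find (prefb^~ s) (leaves t) < size (leaves t) by rewrite -has_find.
have Hpi := nth_find [::] Hh.
set i := find _ _ in Hi Hpi *.
have E : nth [::] (leaves t) i = nth [::] (leaves t) j.
  case: (leqP (size (nth [::] (leaves t) i)) (size (nth [::] (leaves t) j))) => Hs.
    exact: leaves_pfree (mem_nth _ Hi) (mem_nth _ Hj) (pref_comparable Hpi Hp Hs).
  symmetry; apply: leaves_pfree (mem_nth _ Hj) (mem_nth _ Hi) (pref_comparable Hp Hpi _); lia.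
by apply/eqP; rewrite -(nth_uniq [::] Hi Hj (leaves_uniq t)) E.
Qed.

Lemma find_leaves_lt d t s : wf d t -> good d s -> find (prefb^~ s) (leaves t) < nleaves t.
Proof. by move=> Hw Hs; rewrite -size_leaves -has_find; apply: leaves_complete Hw Hs. Qed.

Lemma pref_find d t s : wf d t -> good d s ->
  prefb (nth [::] (leaves t) (find (prefb^~ s) (leaves t))) s.
Proof. move=> Hw Hs; exact: (nth_find [::] (leaves_complete Hw Hs)). Qed.

Definition tact (x : triple) (s : nat -> nat) : nat -> nat :=
  let i := find (prefb^~ s) (leaves (tU x)) in
  sapp (nth [::] (leaves (tT x)) (pnat (tsig x) i))
       (sdrop (size (nth [::] (leaves (tU x)) i)) s).

Lemma tact_leaf x i r : i < tn x -> nleaves (tU x) = tn x ->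
  tact x (sapp (nth [::] (leaves (tU x)) i) r) =
  sapp (nth [::] (leaves (tT x)) (pnat (tsig x) i)) r.
Proof.
move=> Hi Hn. rewrite /tact (@find_leaves _ _ i) ?Hn //; last exact: pref_sapp.
by rewrite sdrop_sapp.
Qed.

Lemma validP d x : valid d x ->
  [/\ wf d (tT x), wf d (tU x), nleaves (tT x) = tn x & nleaves (tU x) = tn x].
Proof. by case/and4P => ? ? /eqP ? /eqP ?. Qed.

Lemma good_tact d x s : valid d x -> good d s -> good d (tact x s).
Proof.
move=> /validP [wT wU nT nU] Hs. rewrite /tact. apply: good_sapp; last exact: good_sdrop.
apply: (leaves_digits wT). apply: mem_nth. rewrite size_leaves nT.
apply: pnat_lt. rewrite -nU. exact: find_leaves_lt wU Hs.
Qed.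

Lemma tact_find d x s : valid d x -> good d s ->
  exists i, [/\ i < tn x, prefb (nth [::] (leaves (tU x)) i) s &
   tact x s = sapp (nth [::] (leaves (tT x)) (pnat (tsig x) i))
       (sdrop (size (nth [::] (leaves (tU x)) i)) s)].
Proof.
move=> /validP [wT wU nT nU] Hs. exists (find (prefb^~ s) (leaves (tU x))).
split => //; first by rewrite -nU; exact: find_leaves_lt wU Hs.
exact: pref_find wU Hs.
Qed.

Lemma nth_lgraft d L k j : k < size L ->
  nth [::] (lgraft d L k) j = if j < k then nth [::] L j else if j < k + d
  then rcons (nth [::] L k) (j - k) else nth [::] L (j.+1 - d).
Proof.
move=> Hk. rewrite /lgraft nth_splice // size_map size_iota.
case: ifP => // Hj1; case: ifP => // Hj.
have Hjk : j - k < d by lia.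
by rewrite (nth_map 0) ?size_iota // nth_iota.
Qed.

Lemma blk_bstart d k l o : (l != k -> o = 0) -> o < d ->
  blk d k (bstart d k l + o) = l /\ offs d k (bstart d k l + o) = o.
Proof.
move=> Ho Hod. rewrite /blk /offs /bstart.
case: (ltngtP l k) => Hlk.
- have -> : o = 0 by apply: Ho; lia.
  rewrite addn0 Hlk. split => //. by case: ifP => //; lia.
- have -> : o = 0 by apply: Ho; lia.
  rewrite addn0. have -> : (l + (d - 1) < k) = false by lia.
  have -> : (l + (d - 1) < k + d) = false by lia.
  split; [lia|]. by case: ifP => //; lia.
- subst l.
  have -> : (k + o < k) = false by lia.
  have -> : (k + o < k + d) by lia.
  split => //. rewrite ifT; lia.
Qed.

Lemma bstart_lt d n k l o : k < n -> l < n -> (l != k -> o = 0) -> o < d ->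
  bstart d k l + o < n + (d - 1).
Proof.
move=> Hk Hl Ho Hod; rewrite /bstart.
case: (ltngtP l k) => Hlk.
- have -> : o = 0 by apply: Ho; lia. lia.
- have -> : o = 0 by apply: Ho; lia. lia.
- lia.
Qed.

Lemma nth_lgraft_ne d L k l : k < size L -> l < size L -> l != k -> 0 < d ->
  nth [::] (lgraft d L k) (bstart d k l) = nth [::] L l.
Proof.
move=> Hk Hl Hlk Hd; rewrite nth_lgraft // /bstart.
case: (ltngtP l k) => H.
- by rewrite H.
- rewrite ifF; last by lia. rewrite ifF; last by lia. congr nth; lia.
- by move: Hlk; rewrite H eqxx.
Qed.

Lemma nth_lgraft_eq d L k o : k < size L -> o < d ->
  nth [::] (lgraft d L k) (bstart d k k + o) = rcons (nth [::] L k) o.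
Proof.
move=> Hk Ho; rewrite nth_lgraft // /bstart ltnn eqxx.
rewrite ifF; last by lia. rewrite ifT; last by lia. by rewrite addKn.
Qed.

Lemma tact_expand d x y s : 0 < d -> expand d x y -> good d s -> tact y s = tact x s.
Proof.
move=> Hd [Hv [k [Htn HT HU Hsig]]] Hs.
have [wT wU nT nU] := validP Hv.
have [i [Hi Hp ->]] := tact_find Hv Hs.
have Hk : k < nleaves (tU x) by rewrite nU.
have HLU : leaves (tU y) = lgraft d (leaves (tU x)) k by rewrite HU leaves_graft.
have Hm : val (tsig x k) = pnat (tsig x) k.
  by rewrite (pnatE _ (ltn_ord k)); congr (val (tsig x _)); apply: val_inj.
have Hm' : pnat (tsig x) k < nleaves (tT x) by rewrite nT; apply: pnat_lt.
have HLT : leaves (tT y) = lgraft d (leaves (tT x)) (pnat (tsig x) k).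
  by rewrite HT Hm leaves_graft.
have HsigP j : j < tn y -> pnat (tsig y) j = varsigma d (tsig x) k j.
  by move=> Hj; rewrite (pnatE _ Hj) Hsig.
have nU' : nleaves (tU y) = tn y by rewrite HU nleaves_graft // nU Htn.
have Hsz : size (leaves (tU x)) = tn x by rewrite size_leaves.
have HszT : size (leaves (tT x)) = tn x by rewrite size_leaves.
have Hpk : pnat (tsig x) k < tn x by apply: pnat_lt.
case: (eqVneq i k) => Eik.
- subst i. set e := size (nth [::] (leaves (tU x)) k). set o := s e.
  have Ho : o < d := Hs e.
  have Hb := blk_bstart (d := d) (k := k) (l := k) (o := o) (fun H => False_ind _ (negP H (eqxx _))) Ho.
  have Hlt : bstart d k k + o < tn y by rewrite Htn; apply: bstart_lt => //; rewrite eqxx.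
  have Hp' : prefb (nth [::] (leaves (tU y)) (bstart d k k + o)) s.
    by rewrite HLU nth_lgraft_eq ?Hsz // prefb_rcons Hp eqxx.
  rewrite /tact (find_leaves (j := bstart d k k + o)) ?nU' //.
  rewrite HsigP // /varsigma. case: Hb => -> ->.
  have E1 := nth_lgraft_eq (d := d) (L := leaves (tT x)) (k := pnat (tsig x) k) (o := o) ltac:(by rewrite HszT) Ho.
  have E2 := nth_lgraft_eq (d := d) (L := leaves (tU x)) (k := k) (o := o) ltac:(by rewrite Hsz) Ho.
  rewrite HLT HLU E1 E2 size_rcons.
  by apply: sapp_rcons.
- have Hb := blk_bstart (d := d) (k := k) (l := i) (o := 0) (fun _ => erefl) Hd.
  rewrite addn0 in Hb.
  have Hlt : bstart d k i < tn y by rewrite Htn -(addn0 (bstart _ _ _)); apply: bstart_lt.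
  have Hp' : prefb (nth [::] (leaves (tU y)) (bstart d k i)) s.
    by rewrite HLU nth_lgraft_ne ?Hsz.
  rewrite /tact (find_leaves (j := bstart d k i)) ?nU' //.
  rewrite HsigP // /varsigma. case: Hb => -> ->. rewrite addn0.
  have Hne : pnat (tsig x) i != pnat (tsig x) k.
    by apply/eqP => /(pnat_inj Hi (ltn_ord k)) E; move: Eik; rewrite E eqxx.
  rewrite HLT HLU nth_lgraft_ne ?Hsz ?HszT //; last by apply: pnat_lt.
  by rewrite nth_lgraft_ne ?Hsz ?HszT // ; apply: pnat_lt.
Qed.

Lemma tact_tequiv d x y s : 0 < d -> tequiv d x y -> good d s -> tact x s = tact y s.
Proof.
move=> Hd H; elim: H s => [a b Hab|a|a b _ IH|a b c _ IH1 _ IH2] s Hs //.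
- by rewrite (tact_expand Hd Hab Hs).
- by rewrite IH.
- by rewrite IH1 // IH2.
Qed.

Lemma valid_tinv d x : valid d x -> valid d (tinv x).
Proof. by case/and4P => *; apply/and4P. Qed.

Lemma tinvK x : tinv (tinv x) = x.
Proof. by case: x => n T U s; rewrite /tinv /= invgK. Qed.

Lemma tact_tid s : tact tid s = s.
Proof.
apply: functional_extensionality => n. by rewrite /tact /= pnat1 /sapp /sdrop /= subn0.
Qed.

Lemma tact_tmul d x y z s : 0 < d -> tmul d x y z -> good d s ->
  tact z s = tact x (tact y s).
Proof.
move=> Hd [a [b [c [[Va [Vb Vc]] [[Ea [Eb Ec]] [[Nac Nbc] [[Tca [Uab Ucb]] Hp]]]]]]] Hs.
have Gb := good_tact Vb Hs.
rewrite (tact_tequiv Hd Ec Hs) (tact_tequiv Hd Eb Hs) (tact_tequiv Hd Ea Gb).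
have [wTa wUa nTa nUa] := validP Va.
have [wTb wUb nTb nUb] := validP Vb.
have [wTc wUc nTc nUc] := validP Vc.
have Hi : find (prefb^~ s) (leaves (tU c)) < tn c by rewrite -nUc; apply: find_leaves_lt wUc Hs.
rewrite /tact Hp // Ucb. rewrite Ucb in Hi.
set i := find _ _ in Hi *.
have Hj : pnat (tsig b) i < tn a by rewrite Nac -Nbc; apply: pnat_lt; rewrite Nbc.
have := tact_leaf (x := a) (i := pnat (tsig b) i) (sdrop (size (nth [::] (leaves (tU b)) i)) s) Hj nUa.
rewrite /tact Uab Tca => ->. done.
Qed.

Lemma tact_inv d x s : valid d x -> good d s -> tact (tinv x) (tact x s) = s.
Proof.
move=> Vx Hs. have [i [Hi Hp ->]] := tact_find Vx Hs.
have [wT wU nT nU] := validP Vx.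
have Hj : pnat (tsig x) i < tn (tinv x) by apply: pnat_lt.
rewrite (tact_leaf _ Hj) //= pnatV. exact: sapp_pref.
Qed.

Lemma tact_inv' d x s : valid d x -> good d s -> tact x (tact (tinv x) s) = s.
Proof.
move=> Vx Hs. have := tact_inv (valid_tinv Vx) Hs. by rewrite tinvK.
Qed.

Definition fnperm n (f : nat -> nat) : 'S_n :=
  match injectiveP (fun i : 'I_n => insubd i (f i)) with
  | ReflectT H => perm H | ReflectF _ => 1%g end.

Lemma fnpermE n f : (forall i, i < n -> f i < n) ->
  (forall i j, i < n -> j < n -> f i = f j -> i = j) ->
  forall i, i < n -> pnat (fnperm n f) i = f i.
Proof.
move=> Hb Hi i Hin. rewrite (pnatE _ Hin) /fnperm.
case: injectiveP => H.
  by rewrite (permE H (Ordinal Hin)) val_insubd /= (Hb i Hin).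
exfalso; apply: H => a b /(congr1 val). rewrite !val_insubd !Hb // => E.
apply: val_inj; exact: (Hi a b (ltn_ord a) (ltn_ord b) E).
Qed.

Lemma bstart_blk d k i : 0 < d -> i = bstart d k (blk d k i) + offs d k i.
Proof.
move=> Hd; rewrite /bstart /blk /offs.
case: (ltnP i k) => H1; case: (ltnP i (k + d)) => H2; repeat (case: ifP => ?); rewrite /= ?addn0; lia.
Qed.

Lemma blk_lt d n k i : 0 < d -> k < n -> i < n + (d - 1) -> blk d k i < n.
Proof. move=> Hd Hk Hi; rewrite /blk; repeat (case: ifP => ?); lia. Qed.

Lemma offs_lt d k i : 0 < d -> offs d k i < d.
Proof. move=> Hd; rewrite /offs; repeat (case: ifP => ?); lia. Qed.

Lemma offs0 d k i : blk d k i != k -> offs d k i = 0.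
Proof. rewrite /blk /offs; repeat (case: ifP => ?); rewrite /= ?eqxx //; lia. Qed.

Lemma varsigma_lt d n (s : 'S_n) k i : 0 < d -> k < n -> i < n + (d - 1) ->
  varsigma d s k i < n + (d - 1).
Proof.
move=> Hd Hk Hi; rewrite /varsigma.
apply: bstart_lt; [exact: pnat_lt|apply: pnat_lt; exact: blk_lt|move=> H|exact: offs_lt].
apply: offs0; apply: contra H => /eqP ->; done.
Qed.

Lemma varsigma_inj d n (s : 'S_n) k i j : 0 < d -> k < n -> i < n + (d - 1) -> j < n + (d - 1) ->
  varsigma d s k i = varsigma d s k j -> i = j.
Proof.
move=> Hd Hk Hi Hj; rewrite /varsigma => E.
have Ho l : l < n + (d - 1) -> pnat s (blk d k l) != pnat s k -> offs d k l = 0.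
  move=> Hl H; apply: offs0; apply: contra H => /eqP ->; done.
have [Bi Oi] := blk_bstart (Ho i Hi) (offs_lt k i Hd).
have [Bj Oj] := blk_bstart (Ho j Hj) (offs_lt k j Hd).
rewrite E in Bi Oi. rewrite Bj in Bi. rewrite Oj in Oi.
have Eb : blk d k i = blk d k j.
  apply: (pnat_inj (s := s)); rewrite ?Bi //; exact: blk_lt.
by rewrite (bstart_blk k i Hd) (bstart_blk k j Hd) Eb Oi.
Qed.

Definition xexp d (x : triple) (k : nat) : triple :=
  @Triple (tn x + (d - 1)) (graft d (tT x) (pnat (tsig x) k)) (graft d (tU x) k)
     (fnperm (tn x + (d - 1)) (varsigma d (tsig x) k)).

Lemma xexp_sig d x k i : 0 < d -> k < tn x -> i < tn x + (d - 1) ->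
  pnat (tsig (xexp d x k)) i = varsigma d (tsig x) k i.
Proof.
move=> Hd Hk Hi; rewrite /xexp /=. apply: fnpermE => //.
- move=> j Hj; exact: varsigma_lt.
- move=> a b Ha Hb; exact: varsigma_inj.
Qed.

Lemma xexp_ok d x k : 0 < d -> valid d x -> k < tn x ->
  valid d (xexp d x k) /\ expand d x (xexp d x k).
Proof.
move=> Hd Vx Hk. have [wT wU nT nU] := validP Vx.
split.
  apply/and4P; split; rewrite /xexp /=; try exact: wf_graft.
  - have Hpk : pnat (tsig x) k < nleaves (tT x) by rewrite nT; apply: pnat_lt.
    by rewrite nleaves_graft // nT.
  - by rewrite nleaves_graft ?nU.
split => //. exists (Ordinal Hk). split => //=.
- by rewrite (pnatE _ Hk).
- move=> i. have := xexp_sig (d := d) (x := x) (k := k) Hd Hk (ltn_ord i).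
  rewrite (pnatE _ (ltn_ord i)) => <-.
  by have -> : Ordinal (ltn_ord i) = i by apply: val_inj.
Qed.

Lemma xexp_one d x k : 0 < d -> k < tn x -> tsig x = 1%g -> tsig (xexp d x k) = 1%g.
Proof.
move=> Hd Hk H1; apply: perm_eq_pnat => i Hi. rewrite pnat1 xexp_sig // H1 /varsigma !pnat1.
by rewrite -bstart_blk.
Qed.

Definition gstep d (a b : tree) := exists2 k, k < nleaves a & b = graft d a k.
Definition reach d := clos_refl_trans tree (gstep d).

Lemma graft_node d l1 c l2 k : k < nleaves c ->
  graft d (Node (l1 ++ c :: l2)) (sumn (map nleaves l1) + k) = Node (l1 ++ graft d c k :: l2).
Proof.
move=> Hk /=; congr Node. elim: l1 => /=; first by rewrite Hk.
move=> c' l1 IH. rewrite -addnA ifF; last by lia. by rewrite addKn IH.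
Qed.

Lemma reach_node d l1 c c' l2 : reach d c c' ->
  reach d (Node (l1 ++ c :: l2)) (Node (l1 ++ c' :: l2)).
Proof.
elim => [a b [k Hk ->]|a|a b e _ IH1 _ IH2].
- apply: rt_step. exists (sumn (map nleaves l1) + k); last by rewrite graft_node.
  rewrite nleavesN map_cat sumn_cat /=. lia.
- exact: rt_refl.
- exact: rt_trans IH1 IH2.
Qed.

Lemma reach_children d l l' : size l = size l' ->
  (forall i, i < size l -> reach d (nth Leaf l i) (nth Leaf l' i)) ->
  reach d (Node l) (Node l').
Proof.
have gen : forall p, size l = size l' ->
  (forall i, i < size l -> reach d (nth Leaf l i) (nth Leaf l' i)) ->
  reach d (Node (p ++ l)) (Node (p ++ l')).
  elim: l l' => [|c r IH] [|c' r'] // p /= Hs0 H; first exact: rt_refl.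
  have Hs : size r = size r' by case: Hs0.
  apply: rt_trans (reach_node p r (H 0 isT)) _.
  rewrite -cat_rcons -(cat_rcons c'). apply: IH => // i Hi. exact: (H i.+1).
exact: (gen [::]).
Qed.

Lemma reach_leaf d t : 0 < d -> wf d t -> reach d Leaf t.
Proof.
move=> Hd; elim/tree_ind': t => [|l IH]; first by move=> _; apply: rt_refl.
rewrite wfN => /andP [/eqP Hl Hw].
apply: rt_trans (_ : reach d Leaf (caret d)) _.
  by apply: rt_step; exists 0.
apply: reach_children; first by rewrite size_nseq.
move=> i Hi. rewrite size_nseq in Hi. rewrite nth_nseq if_same. apply: (foldr_nth IH); first by rewrite Hl.
by apply: (all_nthP Leaf Hw); rewrite Hl.
Qed.

Lemma wf_reach d t t' : reach d t t' -> wf d t -> wf d t'.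
Proof.
elim => [a b [k Hk ->]|a|a b e _ IH1 _ IH2] //; first exact: wf_graft.
by move=> H; apply: IH2; apply: IH1.
Qed.

Lemma collect (P : nat -> tree -> Prop) n : (forall i, i < n -> exists v, P i v) ->
  exists vs, size vs = n /\ forall i, i < n -> P i (nth Leaf vs i).
Proof.
elim: n P => [|n IH] P H; first by exists [::].
have [v Hv] := H 0 isT.
have [vs [Hs Hvs]] := IH (fun i => P i.+1) (fun i Hi => H i.+1 Hi).
by exists (v :: vs); split => [|[|i] Hi] /=; [rewrite Hs|exact: Hv|exact: Hvs].
Qed.

Lemma reach_common d T U : 0 < d -> wf d T -> wf d U ->
  exists V, reach d T V /\ reach d U V.
Proof.
move=> Hd; elim/tree_ind': T U => [|l IH] U HT HU.
  by exists U; split; [exact: reach_leaf|exact: rt_refl].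
case: U HU => [|l'] HU.
  by exists (Node l); split; [exact: rt_refl|exact: reach_leaf].
move: HT HU; rewrite !wfN => /andP [/eqP Hl Hw] /andP [/eqP Hl' Hw'].
have Hc : forall i, i < d -> exists v, reach d (nth Leaf l i) v /\ reach d (nth Leaf l' i) v.
  move=> i Hi. have Hi1 : i < size l by rewrite Hl. have Hi2 : i < size l' by rewrite Hl'.
  exact: (foldr_nth IH Hi1 _ (all_nthP Leaf Hw _ Hi1) (all_nthP Leaf Hw' _ Hi2)).
have [vs [Hs Hvs]] := @collect (fun i v => reach d (nth Leaf l i) v /\ reach d (nth Leaf l' i) v) d Hc.
exists (Node vs); split; apply: reach_children; rewrite ?Hl ?Hl' ?Hs // => i Hi.
- by case: (Hvs i Hi).
- by case: (Hvs i Hi).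
Qed.

Lemma expand_U d U U' : 0 < d -> reach d U U' -> forall x, valid d x -> tU x = U ->
  exists x', [/\ valid d x', tequiv d x x', tU x' = U',
    (tsig x = 1%g -> tsig x' = 1%g) & (tsig x = 1%g -> tT x = tU x -> tT x' = tU x')].
Proof.
move=> Hd; elim => [a b [k Hk ->]|a|a b e _ IH1 _ IH2] x Vx Ex.
- have [_ _ _ nU] := validP Vx.
  have Hk' : k < tn x by rewrite -nU Ex.
  have [V' Ex'] := xexp_ok Hd Vx Hk'.
  exists (xexp d x k); split => //.
  + exact: rst_step.
  + by rewrite /= Ex.
  + exact: xexp_one.
  + by move=> H1 HTU; rewrite /= H1 pnat1 HTU.
- by exists x; split => //; apply: rst_refl.
- have [y [Vy Exy Ey H1 H2]] := IH1 x Vx Ex.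
  have [z [Vz Eyz Ez H1' H2']] := IH2 y Vy Ey.
  exists z; split => //; first exact: rst_trans Exy Eyz.
  + by move=> H; apply: H1'; apply: H1.
  + by move=> H HH; apply: H2'; [apply: H1|apply: H2].
Qed.

Lemma expand_T d T T' : 0 < d -> reach d T T' -> forall x, valid d x -> tT x = T ->
  exists x', [/\ valid d x', tequiv d x x', tT x' = T' & (tsig x = 1%g -> tsig x' = 1%g)].
Proof.
move=> Hd; elim => [a b [m Hm ->]|a|a b e _ IH1 _ IH2] x Vx Ex.
- have [_ _ nT _] := validP Vx.
  have Hm' : m < tn x by rewrite -nT Ex.
  set k := pnat (tsig x)^-1 m.
  have Hk' : k < tn x by apply: pnat_lt.
  have [V' Ex'] := xexp_ok Hd Vx Hk'.
  exists (xexp d x k); split => //.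
  + exact: rst_step.
  + by rewrite /= /k pnatK Ex.
  + exact: xexp_one.
- by exists x; split => //; apply: rst_refl.
- have [y [Vy Exy Ey H1]] := IH1 x Vx Ex.
  have [z [Vz Eyz Ez H1']] := IH2 y Vy Ey.
  exists z; split => //; first exact: rst_trans Exy Eyz.
  by move=> H; apply: H1'; apply: H1.
Qed.

Lemma tmul_exists d x y : 0 < d -> valid d x -> valid d y ->
  exists z, [/\ valid d z, tmul d x y z & (tsig x = 1%g -> tsig y = 1%g -> tsig z = 1%g)].
Proof.
move=> Hd Vx Vy.
have [wTx wUx nTx nUx] := validP Vx.
have [wTy wUy nTy nUy] := validP Vy.
have [R [R1 R2]] := reach_common Hd wUx wTy.
have [x' [Vx' Ex' Ux' Hx1 _]] := expand_U Hd R1 Vx erefl.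
have [y' [Vy' Ey' Ty' Hy1]] := expand_T Hd R2 Vy erefl.
have [wTx' wUx' nTx' nUx'] := validP Vx'.
have [wTy' wUy' nTy' nUy'] := validP Vy'.
have Nxy : tn x' = tn y' by rewrite -nUx' -nTy' Ux' Ty'.
set f := fun i => pnat (tsig x') (pnat (tsig y') i).
have Hf : forall i, i < tn y' -> pnat (fnperm (tn y') f) i = f i.
  apply: fnpermE => [i Hi|i j Hi Hj E].
  - have H' : pnat (tsig y') i < tn x' by rewrite Nxy; apply: pnat_lt.
    exact: (leq_trans (pnat_lt (tsig x') H') (eq_leq Nxy)).
  - have Hi' : pnat (tsig y') i < tn x' by rewrite Nxy; apply: pnat_lt.
    have Hj' : pnat (tsig y') j < tn x' by rewrite Nxy; apply: pnat_lt.
    apply: (pnat_inj (s := tsig y')) => //.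
    exact: (pnat_inj (s := tsig x') Hi' Hj' E).
exists (@Triple (tn y') (tT x') (tU y') (fnperm (tn y') f)).
split.
- apply/and4P; split => //=; apply/eqP => //. by rewrite nTx'.
- exists x', y', (@Triple (tn y') (tT x') (tU y') (fnperm (tn y') f)).
  split; first by split => //; split => //; apply/and4P; split => //=; apply/eqP => //; rewrite nTx'.
  split; first by split => //; split => //; apply: rst_refl.
  split; first by split.
  split; first by split => //; rewrite Ux' Ty'.
  exact: Hf.
- move=> H1 H2. apply: perm_eq_pnat => i Hi. rewrite Hf // pnat1 /f.
  by rewrite (Hx1 H1) (Hy1 H2) !pnat1.
Qed.

Definition pre (t : tree) (s : nat -> nat) := nth [::] (leaves t) (find (prefb^~ s) (leaves t)).

Lemma pre_mem t s a : a \in leaves t -> prefb a s -> pre t s = a.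
Proof.
move=> Ha Hp. rewrite /pre (@find_leaves _ _ (index a (leaves t))) ?nth_index //.
by rewrite -size_leaves index_mem.
Qed.

Lemma pre_in d t s : wf d t -> good d s -> pre t s \in leaves t /\ prefb (pre t s) s.
Proof.
move=> Hw Hs; split; last exact: pref_find Hw Hs.
apply: mem_nth. rewrite size_leaves. exact: find_leaves_lt Hw Hs.
Qed.

Definition scons (i : nat) (s : nat -> nat) : nat -> nat := fun n => if n is n'.+1 then s n' else i.

Lemma good_scons d i s : i < d -> good d s -> good d (scons i s).
Proof. move=> Hi Hs [|n] /=; [exact: Hi|exact: Hs]. Qed.

Lemma pre_node d l i s : wf d (Node l) -> i < size l -> good d s ->
  pre (Node l) (scons i s) = i :: pre (nth Leaf l i) s.
Proof.
move=> Hw Hi Hs. move: (Hw); rewrite wfN => /andP [/eqP Hl Hw0].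
have Hwc : wf d (nth Leaf l i) by apply: (all_nthP Leaf Hw0).
have [Hm Hp] := pre_in Hwc Hs.
apply: pre_mem; first by apply/memN; exists i, (pre (nth Leaf l i) s).
apply/prefbP => -[|j] //= Hj. by move/prefbP: Hp => ->.
Qed.

Lemma tree_eq_pre d T U : 0 < d -> wf d T -> wf d U ->
  (forall s, good d s -> pre T s = pre U s) -> T = U.
Proof.
move=> Hd; elim/tree_ind': T U => [|l IH] U HT HU H.
  case: U HU H => // l' HU H. exfalso.
  have Hs : good d (fun _ => 0) by [].
  have [Hm _] := pre_in HU Hs. rewrite -H // in Hm.
  by apply: (leavesN_ne Hm).
case: U HU H => [|l'] HU H.
  exfalso. have Hs : good d (fun _ => 0) by [].
  have [Hm _] := pre_in HT Hs. rewrite H // in Hm. by apply: (leavesN_ne Hm).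
move: (HT) (HU); rewrite !wfN => /andP [/eqP Hl Hw] /andP [/eqP Hl' Hw'].
congr Node. apply: (@eq_from_nth _ Leaf); first by rewrite Hl Hl'.
move=> i Hi.
apply: (foldr_nth IH Hi); first exact: (all_nthP Leaf Hw).
  by apply: (all_nthP Leaf Hw'); rewrite Hl' -Hl.
move=> s Hs.
have Hid : i < d by rewrite -Hl.
have := H (scons i s) (good_scons Hid Hs).
rewrite (pre_node HT Hi Hs) (pre_node HU _ Hs) ?Hl' -?Hl //. by case.
Qed.

Lemma sapp_inj' d a b : 1 < d -> (forall r, good d r -> sapp a r = sapp b r) -> a = b.
Proof.
move=> Hd H.
have G0 : good d (fun _ => 0) by move=> n; lia.
have G1 : good d (fun _ => 1) by [].
have Hn r n : good d r -> sapp a r n = sapp b r n by move=> Hr; rewrite H.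
have Hs : size a = size b.
  apply/eqP; rewrite eqn_leq; apply/andP; split; rewrite leqNgt; apply/negP => Hlt.
  - have := Hn (fun _ => 0) (size b) G0; have := Hn (fun _ => 1) (size b) G1.
    by rewrite /sapp Hlt ltnn ?subnn => ->.
  - have := Hn (fun _ => 0) (size a) G0; have := Hn (fun _ => 1) (size a) G1.
    by rewrite /sapp Hlt ltnn ?subnn => <-.
apply: (@eq_from_nth _ 0 _ _ Hs) => j Hj.
by have := Hn (fun _ => 0) j G0; rewrite /sapp Hj -Hs Hj.
Qed.

Lemma triple_eq x y : tn x = tn y -> tT x = tT y -> tU x = tU y ->
  (forall j, pnat (tsig x) j = pnat (tsig y) j) -> x = y.
Proof.
case: x => n T U s; case: y => n' T' U' s' /= En ET EU Hp.
subst n' T' U'. congr Triple. apply: perm_eq_pnat => j _; exact: Hp.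
Qed.

Lemma tact_id_tequiv d g : 1 < d -> valid d g -> (forall s, good d s -> tact g s = s) ->
  tequiv d g tid.
Proof.
move=> Hd Vg H. have Hd0 : 0 < d by lia.
have [wT wU nT nU] := validP Vg.
have E i : i < tn g -> nth [::] (leaves (tT g)) (pnat (tsig g) i) = nth [::] (leaves (tU g)) i.
  move=> Hi. apply: (sapp_inj' Hd) => r Hr.
  rewrite -(tact_leaf _ Hi nU). apply: H. apply: good_sapp => //.
  apply: (leaves_digits wU). by apply: mem_nth; rewrite size_leaves nU.
have ETU : tT g = tU g.
  apply: (tree_eq_pre Hd0 wT wU) => s Hs.
  have [i [Hi Hp _]] := tact_find Vg Hs.
  have HmU : nth [::] (leaves (tU g)) i \in leaves (tU g) by apply: mem_nth; rewrite size_leaves nU.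
  have HmT : nth [::] (leaves (tU g)) i \in leaves (tT g).
    by rewrite -E //; apply: mem_nth; rewrite size_leaves nT; apply: pnat_lt.
  by rewrite (pre_mem HmU Hp) (pre_mem HmT Hp).
have Hs1 : tsig g = 1%g.
  apply: perm_eq_pnat => i Hi. rewrite pnat1. apply/eqP.
  rewrite -(nth_uniq [::] _ _ (leaves_uniq (tT g))) ?size_leaves ?nT //; last exact: pnat_lt.
  by rewrite E // ETU.
have Vt : valid d tid by [].
have [x' [Vx' Ex' Ux' H1 H2]] := expand_U Hd0 (reach_leaf Hd0 wU) Vt erefl.
have [wT' wU' nT' nU'] := validP Vx'.
have -> : g = x'.
  apply: triple_eq.
  - by rewrite -nU -nU' Ux'.
  - by rewrite ETU H2 // Ux'.
  - by rewrite Ux'.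
  - by move=> j; rewrite Hs1 H1 // !pnat1.
exact: rst_sym.
Qed.

Lemma path_tree d v : all (fun x => x < d) v -> exists t, wf d t /\ v \in leaves t.
Proof.
elim: v => [|j v IH] /=; first by exists Leaf.
case/andP => Hj /IH [t [Hw Hv]].
exists (Node (set_nth Leaf (nseq d Leaf) j t)); split.
  rewrite wfN size_set_nth size_nseq. apply/andP; split; first by apply/eqP; lia.
  apply/(all_nthP Leaf) => i _. rewrite nth_set_nth /=. case: eqP => // _.
  by rewrite nth_nseq if_same.
apply/memN; exists j, v; split => //.
  by rewrite size_set_nth size_nseq; lia.
by rewrite nth_set_nth /= eqxx.
Qed.

Lemma nleaves_pos d t : 0 < d -> wf d t -> 0 < nleaves t.
Proof.
move=> Hd Hw. rewrite -size_leaves. have := leaves_complete (s := fun _ => 0) Hw (fun _ => Hd).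
by case: (leaves t).
Qed.

Lemma sdrop_add a b s : sdrop (a + b) s = sdrop b (sdrop a s).
Proof. apply: functional_extensionality => n; by rewrite /sdrop addnA. Qed.

Definition loc (t : tree) (i : nat) (ST SU : tree) : triple :=
  @Triple (nleaves t - 1 + nleaves SU) (subst t i ST) (subst t i SU) 1%g.

Definition tri1 (ST SU : tree) : triple := @Triple (nleaves SU) ST SU 1%g.

Lemma valid_loc d t i ST SU : wf d t -> i < nleaves t -> wf d ST -> wf d SU ->
  nleaves ST = nleaves SU -> valid d (loc t i ST SU).
Proof.
move=> Ht Hi HST HSU E. apply/and4P; split => /=; try exact: wf_subst.
- by rewrite nleaves_subst // E.
- by rewrite nleaves_subst.
Qed.

Lemma tact_loc_in d t i ST SU r : 0 < d -> wf d t -> i < nleaves t -> wf d ST -> wf d SU ->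
  nleaves ST = nleaves SU -> good d r ->
  tact (loc t i ST SU) (sapp (nth [::] (leaves t) i) r) =
  sapp (nth [::] (leaves t) i) (tact (tri1 ST SU) r).
Proof.
move=> Hd Ht Hi HST HSU E Hr.
have VX : valid d (tri1 ST SU) by apply/and4P; split => //=; apply/eqP.
have [j [Hj Hp ->]] := tact_find VX Hr.
rewrite /= pnat1 in Hj *.
set v := nth [::] (leaves t) i.
have Hsz : i < size (leaves t) by rewrite size_leaves.
have HU : nth [::] (leaves (subst t i SU)) (i + j) = v ++ nth [::] (leaves SU) j.
  rewrite leaves_subst // nth_splice // size_map size_leaves.
  rewrite ifF; last by lia. rewrite ifT; last by lia.
  by rewrite addKn (nth_map [::]) // size_leaves.
have HT : nth [::] (leaves (subst t i ST)) (i + j) = v ++ nth [::] (leaves ST) j.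
  rewrite leaves_subst // nth_splice // size_map size_leaves.
  rewrite ifF; last by lia. rewrite ifT; last by lia.
  by rewrite addKn (nth_map [::]) // size_leaves E.
have Hb : i + j < nleaves (subst t i SU) by rewrite nleaves_subst //; lia.
rewrite /tact (@find_leaves _ _ (i + j)) //; last first.
  by rewrite HU prefb_cat pref_sapp sdrop_sapp.
rewrite /= pnat1 HU HT size_cat sdrop_add sdrop_sapp sapp_cat. done.
Qed.

Lemma tact_loc_out d t i ST SU s : 0 < d -> wf d t -> i < nleaves t -> wf d ST -> wf d SU ->
  nleaves ST = nleaves SU -> good d s -> ~~ prefb (nth [::] (leaves t) i) s ->
  tact (loc t i ST SU) s = s.
Proof.
move=> Hd Ht Hi HST HSU E Hs Hn.
set L := leaves t.
have Hl := find_leaves_lt Ht Hs. have Hp := pref_find Ht Hs.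
set l := find _ _ in Hl Hp.
have Hli : l != i by apply: contra Hn => /eqP <-.
have Hsz : i < size L by rewrite size_leaves.
have Hpos : 0 < nleaves SU := nleaves_pos Hd HSU.
set l' := if l < i then l else l + nleaves SU - 1.
have Hnth (S : tree) : nleaves S = nleaves SU ->
    nth [::] (leaves (subst t i S)) l' = nth [::] L l.
  move=> ES. rewrite leaves_subst // nth_splice // size_map size_leaves ES /l'.
  case: (ltnP l i) => H1; first by rewrite H1.
  have H2 : i < l by rewrite ltn_neqAle eq_sym Hli H1.
  rewrite ifF; last by lia. rewrite ifF; last by lia. congr nth; lia.
have Hb : l' < nleaves (subst t i SU) by rewrite nleaves_subst // /l'; case: ifP; lia.
rewrite /tact (@find_leaves _ _ l') //; last by rewrite Hnth.
rewrite /= pnat1 (Hnth _ E) (Hnth _ erefl). exact: sapp_pref.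
Qed.

Definition U0 d := graft d (caret d) (d - 1).
Definition T0 d := graft d (caret d) 0.
Definition X0 d := tri1 (T0 d) (U0 d).

Lemma nth_caret d j : j < d -> nth [::] (leaves (caret d)) j = [:: j].
Proof. move=> Hj; by rewrite leaves_caret (nth_map 0) ?size_iota ?nth_iota. Qed.

Section X0.
Variable d : nat.
Hypothesis Hd : 1 < d.

Lemma Hd0 : 0 < d. Proof. lia. Qed.

Lemma wf_U0 : wf d (U0 d). Proof. exact: wf_graft (wf_caret d). Qed.
Lemma wf_T0 : wf d (T0 d). Proof. exact: wf_graft (wf_caret d). Qed.
Lemma nleaves_U0 : nleaves (U0 d) = d + (d - 1).
Proof. by rewrite /U0 nleaves_graft ?nleaves_caret //; lia. Qed.
Lemma nleaves_T0 : nleaves (T0 d) = d + (d - 1).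
Proof. by rewrite /T0 nleaves_graft ?nleaves_caret //; lia. Qed.
Lemma nleaves_TU0 : nleaves (T0 d) = nleaves (U0 d).
Proof. by rewrite nleaves_T0 nleaves_U0. Qed.

Lemma valid_X0 : valid d (X0 d).
Proof. apply/and4P; split; [exact: wf_T0|exact: wf_U0|apply/eqP; exact: nleaves_TU0|by []]. Qed.

Lemma szC : size (leaves (caret d)) = d.
Proof. by rewrite size_leaves nleaves_caret. Qed.

Lemma LU0 : leaves (U0 d) = lgraft d (leaves (caret d)) (d - 1).
Proof. rewrite /U0 leaves_graft // nleaves_caret; lia. Qed.
Lemma LT0 : leaves (T0 d) = lgraft d (leaves (caret d)) 0.
Proof. rewrite /T0 leaves_graft // nleaves_caret; lia. Qed.
Lemma szC' k : k < d -> k < size (leaves (caret d)).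
Proof. by rewrite szC. Qed.

Lemma tact_X0_a r : tact (X0 d) (sapp [:: 0] r) = sapp [:: 0; 0] r.
Proof.
have HU : nth [::] (leaves (U0 d)) 0 = [:: 0].
  rewrite LU0 (nth_lgraft _ _ (szC' (_ : d - 1 < d))); last lia.
  have -> : 0 < d - 1 by lia. apply: nth_caret; lia.
have HT : nth [::] (leaves (T0 d)) 0 = [:: 0; 0].
  rewrite LT0 (nth_lgraft _ _ (szC' (_ : 0 < d))); last lia.
  have -> : 0 < 0 + d by lia. by rewrite /= nth_caret //; lia.
have H0 : 0 < tn (X0 d) by change (0 < nleaves (U0 d)); rewrite nleaves_U0; lia.
by rewrite -{1}HU (tact_leaf _ H0) //= pnat1 HT.
Qed.

Lemma tact_X0_b r : tact (X0 d) (sapp [:: d - 1; 0] r) = sapp [:: 0; d - 1] r.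
Proof.
have HU : nth [::] (leaves (U0 d)) (d - 1) = [:: d - 1; 0].
  rewrite LU0 (nth_lgraft _ _ (szC' (_ : d - 1 < d))); last lia.
  have -> : d - 1 < d - 1 + d by lia. by rewrite ltnn subnn nth_caret //; lia.
have HT : nth [::] (leaves (T0 d)) (d - 1) = [:: 0; d - 1].
  rewrite LT0 (nth_lgraft _ _ (szC' (_ : 0 < d))); last lia.
  have -> : d - 1 < 0 + d by lia. by rewrite /= subn0 nth_caret //; lia.
have H0 : d - 1 < tn (X0 d) by change (d - 1 < nleaves (U0 d)); rewrite nleaves_U0; lia.
by rewrite -{1}HU (tact_leaf _ H0) //= pnat1 HT.
Qed.

Definition ee (n : nat) : nat -> nat := fun q => if q == n then d - 1 else 0.

Lemma good_ee n : good d (ee n).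
Proof. move=> q; rewrite /ee; case: ifP; lia. Qed.

Lemma ee_S n : ee n.+1 = sapp [:: 0] (ee n).
Proof. apply: functional_extensionality => -[|q] //=. by rewrite /sapp /= subn1. Qed.

Lemma ee_0 : ee 0 = sapp [:: d - 1; 0] (fun _ => 0).
Proof. by apply: functional_extensionality => -[|[|q]]. Qed.

Lemma ee_1 : ee 1 = sapp [:: 0; d - 1] (fun _ => 0).
Proof. by apply: functional_extensionality => -[|[|q]]. Qed.

Lemma tact_X0_ee n : tact (X0 d) (ee n) = ee n.+1.
Proof.
case: n => [|n]; first by rewrite ee_0 tact_X0_b ee_1.
by rewrite ee_S tact_X0_a !ee_S -(sapp_cat [:: 0] [:: 0]).
Qed.

End X0.

Lemma fix_inv d x s : valid d x -> good d s -> tact x s = s -> tact (tinv x) s = s.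
Proof. move=> Vx Hs H. by rewrite -{1}H (tact_inv Vx Hs). Qed.

Lemma inv_of d x s s' : valid d x -> good d s' -> tact x s' = s -> tact (tinv x) s = s'.
Proof. move=> Vx Hs H. by rewrite -H (tact_inv Vx Hs). Qed.

Lemma leaf_index t v : v \in leaves t ->
  exists2 i, i < nleaves t & nth [::] (leaves t) i = v.
Proof.
move=> Hv; exists (index v (leaves t)); last exact: nth_index.
by rewrite -size_leaves index_mem.
Qed.

Lemma all_cat' d (a b : seq nat) : all (fun x => x < d) a -> all (fun x => x < d) b ->
  all (fun x => x < d) (a ++ b).
Proof. by rewrite all_cat => -> ->. Qed.

Lemma comm_exists d u : 1 < d -> all (fun x => x < d) u ->
  exists c, [/\ valid d c, inFF d c, tsig c = 1%g,
    (forall k, tact c (sapp (u ++ [:: 0; d - 1]) (ee d k)) =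
               sapp (u ++ [:: 0; d - 1]) (ee d k.+1)) &
    (forall s, good d s -> ~~ prefb u s -> tact c s = s)].
Proof.
move=> Hd Hu. have Hd0 : 0 < d by lia.
have Hd1 : d - 1 < d by lia.
have Hd2 : (d - 1 == 0) = false by lia.
have Hl2 : all (fun x => x < d) [:: 0; d - 1] by apply/andP; split; [done|apply/andP; split => //; done].
have Hl2' : all (fun x => x < d) [:: d - 1; 0] by apply/andP; split; [done|apply/andP; split => //; done].
set v := u ++ [:: 0; d - 1].
have Hv : all (fun x => x < d) v.
  by apply: all_cat'.
have [ta [wa Hva]] := path_tree Hv.
have [ia Hia Eia] := leaf_index Hva.
have [tb [wb Hvb]] := path_tree Hu.
have [ib Hib Eib] := leaf_index Hvb.
have wT := wf_T0 d. have wU := wf_U0 d. have nTU := nleaves_TU0 Hd.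
set a := loc ta ia (T0 d) (U0 d).
set b := loc tb ib (T0 d) (U0 d).
have Va : valid d a by apply: valid_loc.
have Vb : valid d b by apply: valid_loc.
have [p [Vp Mp Sp]] := tmul_exists Hd0 Va Vb.
have [q [Vq Mq Sq]] := tmul_exists Hd0 (valid_tinv Va) (valid_tinv Vb).
have [c [Vc Mc Sc]] := tmul_exists Hd0 Vp Vq.
have Ha1 : tsig a = 1%g by [].
have Hb1 : tsig b = 1%g by [].
have Hia1 : tsig (tinv a) = 1%g by rewrite /= invg1.
have Hib1 : tsig (tinv b) = 1%g by rewrite /= invg1.
have Fa : inF d a by exists a; split => //; apply: rst_refl.
have Fb : inF d b by exists b; split => //; apply: rst_refl.
have Ain r : good d r -> tact a (sapp v r) = sapp v (tact (X0 d) r).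
  by move=> Hr; have := tact_loc_in Hd0 wa Hia wT wU nTU Hr; rewrite Eia.
have Bin r : good d r -> tact b (sapp u r) = sapp u (tact (X0 d) r).
  by move=> Hr; have := tact_loc_in Hd0 wb Hib wT wU nTU Hr; rewrite Eib.
have Aout s : good d s -> ~~ prefb v s -> tact a s = s.
  by move=> Hs Hn; apply: (tact_loc_out Hd0 wa Hia wT wU nTU Hs); rewrite Eia.
have Bout s : good d s -> ~~ prefb u s -> tact b s = s.
  by move=> Hs Hn; apply: (tact_loc_out Hd0 wb Hib wT wU nTU Hs); rewrite Eib.
have Gsapp w r : all (fun x => x < d) w -> good d r -> good d (sapp w r) by move=> *; apply: good_sapp.
have Cq s : good d s -> tact c s = tact a (tact b (tact (tinv a) (tact (tinv b) s))).
  move=> Hs. rewrite (tact_tmul Hd0 Mc Hs) (tact_tmul Hd0 Mq Hs).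
  rewrite (tact_tmul Hd0 Mp) //. apply: good_tact (valid_tinv Va) _.
  exact: good_tact (valid_tinv Vb) Hs.
exists c; split => //.
- apply: (FF_comm Fa Fb Va Vb Vc). exists p, q. by split.
- by apply: Sc; [apply: Sp|apply: Sq].
- move=> k. have Gk := good_ee Hd k.
  set q1 := sapp u (sapp [:: d - 1; 0] (ee d k)).

  have Gq1 : good d q1 by apply: good_sapp => //; apply: good_sapp.
  have E0 : sapp v (ee d k) = sapp u (sapp [:: 0; d - 1] (ee d k)) by rewrite sapp_cat.
  have HA : tact b q1 = sapp v (ee d k) by rewrite /q1 Bin ?tact_X0_b ?E0 //; apply: good_sapp.
  have HB : tact (tinv b) (sapp v (ee d k)) = q1 by exact: (inv_of Vb Gq1 HA).
  have HC : tact a q1 = q1.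
    apply: Aout => //. rewrite /v /q1 prefb_cat sdrop_sapp /prefb /=.
    apply/negP => /andP [_ /eqP [E _]]. move: E; rewrite /sapp /= => E. by rewrite E eqxx in Hd2.
  have HD : tact (tinv a) q1 = q1 by exact: (fix_inv Va Gq1 HC).
  rewrite Cq; last by apply: good_sapp.
  by rewrite HB HD HA Ain // tact_X0_ee.
- move=> s Hs Hn.
  have Hnv : ~~ prefb v s by rewrite /v prefb_cat negb_and Hn.
  rewrite Cq // (fix_inv Vb Hs (Bout s Hs Hn)) (fix_inv Va Hs (Aout s Hs Hnv)).
  by rewrite Bout // Aout.
Qed.

Lemma pow_exists d u w c : 1 < d -> all (fun x => x < d) w -> valid d c -> inFF d c ->
  tsig c = 1%g ->
  (forall k, tact c (sapp w (ee d k)) = sapp w (ee d k.+1)) ->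
  (forall s, good d s -> ~~ prefb u s -> tact c s = s) ->
  forall n, exists h, [/\ valid d h, inFF d h, tsig h = 1%g,
    (forall k, tact h (sapp w (ee d k)) = sapp w (ee d (k + n))) &
    (forall s, good d s -> ~~ prefb u s -> tact h s = s)].
Proof.
move=> Hd Hw Vc Fc Sc Ac Xc. have Hd0 : 0 < d by lia.
elim => [|n [h [Vh Fh Sh Ah Xh]]].
  exists tid; split => //; first exact: FF_id.
  - by move=> k; rewrite tact_tid addn0.
  - by move=> s _ _; rewrite tact_tid.
have [z [Vz Mz Sz]] := tmul_exists Hd0 Vh Vc.
exists z; split => //.
- exact: FF_mul Fh Fc Vz Mz.
- exact: Sz.
- move=> k. rewrite (tact_tmul Hd0 Mz); last by apply: good_sapp => //; apply: good_ee.
  by rewrite Ac Ah addSnnS.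
- move=> s Hs Hn. by rewrite (tact_tmul Hd0 Mz Hs) Xc // Xh.
Qed.

Lemma avoid (l : seq nat) : exists2 n, n < (size l).+1 & n \notin l.
Proof.
case: (boolP (has (fun n => n \notin l) (iota 0 (size l).+1))) => [/hasP [n Hn Hnl]|/hasPn H].
  by exists n => //; move: Hn; rewrite mem_iota.
exfalso. have Hsub : {subset iota 0 (size l).+1 <= l} by move=> x /H; rewrite negbK.
have := uniq_leq_size (iota_uniq 0 (size l).+1) Hsub. by rewrite size_iota ltnn.
Qed.

Lemma find_iota_eq (P : pred nat) n M : n < M -> (forall q, q < M -> P q = (q == n)) ->
  find P (iota 0 M) = n.
Proof.
move=> Hn H. rewrite (@eq_in_find _ _ (pred1 n)); last first.
  by move=> q; rewrite mem_iota => /andP [_ Hq]; rewrite H.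
have := index_uniq 0 (_ : n < size (iota 0 M)) (iota_uniq 0 M).
rewrite size_iota nth_iota // => /(_ Hn). by [].
Qed.

Lemma nth_mk (a : seq nat) t m p : p < size a + m -> nth 0 (a ++ mkseq t m) p = sapp a t p.
Proof.
move=> Hp. rewrite nth_cat /sapp. case: ltnP => // H.
by rewrite nth_mkseq //; lia.
Qed.

Lemma all_mkseq d t m : good d t -> all (fun x => x < d) (mkseq t m).
Proof. by move=> Ht; apply/(all_nthP 0) => j; rewrite size_mkseq => Hj; rewrite nth_mkseq. Qed.

Lemma main_core d g : 1 < d -> valid d g -> ~ tequiv d g tid ->
  forall sl : seq triple, exists h c,
    [/\ inFF d h, tsig h = 1%g, valid d h /\ valid d c,
        tconj d h g c & forall i, i < size sl -> ~ tequiv d c (nth tid sl i)].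
Proof.
move=> Hd Vg Hng sl. have Hd0 : 0 < d by lia.
have [s [Hs Hgs]] : exists s, good d s /\ tact g s <> s.
  apply: NNPP => H; apply: Hng; apply: tact_id_tequiv => // s Hs.
  apply: NNPP => H2; apply: H; by exists s.
have [wT wU nT nU] := validP Vg.
have [i [Hi Hp Eg]] := tact_find Vg Hs.
set a' := nth [::] (leaves (tU g)) i in Hp Eg.
set b' := nth [::] (leaves (tT g)) (pnat (tsig g) i) in Eg.
set t := sdrop (size a') s in Eg.
have Es : s = sapp a' t by rewrite /t sapp_pref.
have [p Hpq] : exists p, s p <> tact g s p.
  apply: NNPP => H; apply: Hgs; apply: functional_extensionality => q.
  apply: NNPP => H2; apply: H; exists q => E; apply: H2; by rewrite E.
have Gt : good d t by apply: good_sdrop.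
have Da : all (fun x => x < d) a'.
  by apply: (leaves_digits wU); apply: mem_nth; rewrite size_leaves nU.
have Db : all (fun x => x < d) b'.
  by apply: (leaves_digits wT); apply: mem_nth; rewrite size_leaves nT; apply: pnat_lt.
set m := p.+1.
set w := a' ++ mkseq t m.
set u := b' ++ mkseq t m.
have Dw : all (fun x => x < d) w by rewrite /w all_cat Da all_mkseq.
have Du : all (fun x => x < d) u by rewrite /u all_cat Db all_mkseq.
have Hg r : tact g (sapp w r) = sapp u r.
  by rewrite /w /u !sapp_cat (tact_leaf _ Hi nU).
have Hnp r : ~~ prefb u (sapp w r).
  apply/negP => /prefbP Hpr.
  have Hpu : p < size u by rewrite /u size_cat size_mkseq; lia.
  have := Hpr p Hpu. rewrite /u nth_mk; last by rewrite /m; lia.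
  rewrite -Eg /sapp ifT; last by rewrite size_cat size_mkseq /m; lia.
  rewrite /w nth_mk; last by rewrite /m; lia.
  by rewrite -Es => E; apply: Hpq.
have [c [Vc Fc Sc Ac Xc]] := comm_exists Hd Du.
set W := u ++ [:: 0; d - 1].
have DW : all (fun x => x < d) W.
  rewrite /W all_cat Du /=. apply/andP; split; first lia. apply/andP; split => //; lia.
have Hpow := pow_exists Hd DW Vc Fc Sc Ac Xc.
set r0 := sapp [:: 0; d - 1] (ee d 0).
set y := sapp w r0.
have Gr0 : good d r0 by apply: good_sapp; [rewrite /= andbT; apply/andP; split; lia|apply: good_ee].
have Gy : good d y by apply: good_sapp.
have Conj n : exists h cn, [/\ inFF d h, tsig h = 1%g, valid d h /\ valid d cn,
     tconj d h g cn & tact cn y = sapp W (ee d n)].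
  have [h [Vh Fh Sh Ah Xh]] := Hpow n.
  have [pn [Vpn Mpn _]] := tmul_exists Hd0 Vh Vg.
  have [cn [Vcn Mcn _]] := tmul_exists Hd0 Vpn (valid_tinv Vh).
  exists h, cn; split => //; first by exists pn.
  rewrite (tact_tmul Hd0 Mcn Gy) (fix_inv Vh Gy (Xh _ Gy (Hnp r0))).
  rewrite (tact_tmul Hd0 Mpn Gy) /y Hg /r0 -sapp_cat -/W Ah add0n. done.
set N := size sl.
set K := fun z : nat -> nat => find (fun q => z (size W + q) != 0) (iota 0 N.+1).
have KZ n : n < N.+1 -> K (sapp W (ee d n)) = n.
  move=> Hn. apply: find_iota_eq => // q Hq.
  rewrite /sapp. have -> : (size W + q < size W) = false by lia.
  rewrite addKn /ee. case: (q == n) => //. apply/eqP; lia.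
have [n Hn Hnl] := avoid [seq K (tact x y) | x <- sl].
rewrite size_map in Hn.
have [h [cn [Fh Sh [Vh Vcn] Hcj Hy]]] := Conj n.
exists h, cn; split => // j Hj Heq.
have Hd0' : 0 < d by lia.
have E := tact_tequiv Hd0' Heq Gy.
have Hk : K (tact (nth tid sl j) y) = n by rewrite -E Hy KZ.
move/negP: Hnl; apply. rewrite -Hk -(nth_map tid 0 (fun x => K (tact x y)) Hj).
by apply: mem_nth; rewrite size_map.
Qed.

End Aux.

Theorem mainTheorem6 (d : nat) (hd : 2 <= d) (W : triple -> Prop) :
  is_subgroupV d W ->
  (forall x, inFF d x -> W x) ->
  (forall g, W g -> ~ tequiv d g tid -> inf_conj d (inFF d) g) /\
  ((forall x, valid d x -> inF d x -> W x) ->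
   forall g, W g -> ~ tequiv d g tid -> inf_conj d (inF d) g).
Proof.
move=> [Hv _ _ _ _] _; split.
- move=> g Wg Hng sl.
  have [h [c [Fh _ [Vh Vc] Hcj Hn]]] := Aux.main_core hd (Hv g Wg) Hng sl.
  by exists h, c; split.
- move=> _ g Wg Hng sl.
  have [h [c [Fh Sh [Vh Vc] Hcj Hn]]] := Aux.main_core hd (Hv g Wg) Hng sl.
  exists h, c; split => //. exists h; split => //. exact: rst_refl.
Qed.
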